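(* Let $n\ge2$ and $M\in M_n(k)$. Identify a DG algebra automorphism $f$ of $\mathcal{A}_{\mathcal{O}_{-1}(k^n)}(M)$ with the matrix $C=(c_{ij})\in\mathrm{GL}_n(k)$ given by $f(x_i)=\sum_j c_{ij}x_j$. Under this identification, $$\mathrm{Aut}_{dg}\,\mathcal{A}_{\mathcal{O}_{-1}(k^n)}(M)=\{C=(c_{ij})_{n\times n}\in\mathrm{QPL}_n(k)\mid M=C^{-1}M(c_{ij}^2)_{n\times n}\}.$$
   Context: $k$ is an algebraically closed field of characteristic zero. For $M=(m_{ij})\in M_n(k)$, $\mathcal{A}_{\mathcal{O}_{-1}(k^n)}(M)$ is the connected cochain DG algebra whose underlying graded algebra is generated by degree-one $x_1,\dots,x_n$ subject to $x_ix_j=-x_jx_i$ ($i<j$), with differential determined by $\partial(x_i)=\sum_j m_{ij}x_j^2$ and the Leibniz rule. $\mathrm{Aut}_{dg}$ denotes the group of DG algebra automorphisms (graded algebra automorphisms commuting with the differential). $\mathrm{QPL}_n(k)$ is the group of invertible $n\times n$ matrices with exactly one nonzero entry in each row and each column; $(c_{ij}^2)$ is the matrix of entrywise squares. *)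

(* Defs.v *)
From HB Require Import structures.
From mathcomp Require Import all_boot all_order all_algebra.
From mathcomp Require Import mpoly.
Set Implicit Arguments. Unset Strict Implicit. Unset Printing Implicit Defensive.
Import GRing.Theory.
Local Open Scope ring_scope.

(* Concrete model of the skew polynomial algebra O_{-1}(k^n):
   k-basis = ordered monomials x^a = x_1^{a_1} ... x_n^{a_n}, stored as
   {mpoly k[n]} (only its vector space / monomial structure is used);
   product x^a * x^b = (-1)^(sum_{i>j} a_i b_j) x^(a+b). *)

Definition tsign (n : nat) (a b : 'X_{1..n}) : nat :=
  (\sum_(i < n) \sum_(j < n | (j < i)%N) (a i * b j))%N.

Definition tmul (k : nzRingType) (n : nat) (p q : {mpoly k[n]}) : {mpoly k[n]} :=
  \sum_(a <- msupp p) \sum_(b <- msupp q)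
     ((p@_a * q@_b * (-1) ^+ tsign a b) *: 'X_[a + b]).

Definition is_homog (k : nzRingType) (n : nat) (d : nat) (p : {mpoly k[n]}) : Prop :=
  forall m, m \in msupp p -> mdeg m = d.

Definition is_diff (k : nzRingType) (n : nat) (M : 'M[k]_n)
    (d : {mpoly k[n]} -> {mpoly k[n]}) : Prop :=
  [/\ forall (c : k) p q, d (c *: p + q) = c *: d p + d q,
      forall (e : nat) p q, is_homog e p ->
        d (tmul p q) = tmul (d p) q + (-1) ^+ e *: tmul p (d q)
    & forall i : 'I_n, d 'X_i = \sum_(j < n) M i j *: tmul 'X_j 'X_j].

Definition is_dg_aut (k : nzRingType) (n : nat)
    (d f : {mpoly k[n]} -> {mpoly k[n]}) : Prop :=
  [/\ bijective f,
      forall (c : k) p q, f (c *: p + q) = c *: f p + f q,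
      f 1 = 1 /\
      forall p q, f (tmul p q) = tmul (f p) (f q),
      forall (e : nat) p, is_homog e p -> is_homog e (f p)
    & forall p, f (d p) = d (f p)].

Definition represents (k : nzRingType) (n : nat)
    (f : {mpoly k[n]} -> {mpoly k[n]}) (C : 'M[k]_n) : Prop :=
  forall i : 'I_n, f 'X_i = \sum_(j < n) C i j *: 'X_j.

Definition QPL (k : comUnitRingType) (n : nat) (C : 'M[k]_n) : Prop :=
  [/\ C \in unitmx,
      forall i, #|[set j | C i j != 0]| = 1%N
    & forall j, #|[set i | C i j != 0]| = 1%N].

(* Main.v *)
Require Import Defs.
From HB Require Import structures.
From mathcomp Require Import all_boot all_order all_algebra all_fingroup.
From mathcomp Require Import mpoly.
From mathcomp Require Import ring.
Set Warnings "-notation-overridden -ambiguous-paths -notation-incompatible-prefix -deprecated".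
Import GRing.Theory.
Local Open Scope ring_scope.
Set Implicit Arguments. Unset Strict Implicit. Unset Printing Implicit Defensive.

Section Basic.
Variable k : fieldType.
Variable n : nat.
Implicit Types p q r : {mpoly k[n]}.
Implicit Types a b m : 'X_{1..n}.

Lemma sum_msupp_sub (V : nmodType) p (s : seq 'X_{1..n}) (G : 'X_{1..n} -> V) :
  uniq s -> {subset msupp p <= s} -> (forall a, p@_a = 0 -> G a = 0) ->
  \sum_(a <- msupp p) G a = \sum_(a <- s) G a.
Proof.
move=> us sub G0.
rewrite [RHS](bigID (fun a => a \in msupp p)) /= [X in _ + X]big1 ?addr0; last first.
  by move=> a /memN_msupp_eq0 /G0.
rewrite -[in RHS]big_filter; apply: perm_big; apply: uniq_perm.
- exact: msupp_uniq.
- exact: filter_uniq.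
by move=> a; rewrite mem_filter; case: (boolP (a \in msupp p)) => // /sub ->.
Qed.

Lemma tmul_sub p q (s t : seq 'X_{1..n}) : uniq s -> uniq t ->
  {subset msupp p <= s} -> {subset msupp q <= t} ->
  tmul p q = \sum_(a <- s) \sum_(b <- t)
     ((p@_a * q@_b * (-1) ^+ tsign a b) *: 'X_[a + b]).
Proof.
move=> us ut sp sq; rewrite /tmul (@sum_msupp_sub _ p s) //; last first.
  by move=> a ->; apply: big1 => b _; rewrite !mul0r scale0r.
apply: eq_bigr => a _.
by rewrite (@sum_msupp_sub _ q t) // => b ->; rewrite mulr0 mul0r scale0r.
Qed.

Lemma tmul_linl c p q r : tmul (c *: p + q) r = c *: tmul p r + tmul q r.
Proof.
set s := undup (msupp p ++ msupp q).
have us : uniq s by exact: undup_uniq.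
have sp : {subset msupp p <= s} by move=> a h; rewrite mem_undup mem_cat h.
have sq : {subset msupp q <= s} by move=> a h; rewrite mem_undup mem_cat h orbT.
have spq : {subset msupp (c *: p + q) <= s}.
  move=> a /msuppD_le; rewrite mem_cat => /orP[/msuppZ_le/sp|/sq] //.
have sr : {subset msupp r <= msupp r} by [].
rewrite (tmul_sub us (msupp_uniq r) spq sr) (tmul_sub us (msupp_uniq r) sp sr).
rewrite (tmul_sub us (msupp_uniq r) sq sr).
rewrite scaler_sumr -big_split; apply: eq_bigr => a _.
rewrite scaler_sumr -big_split; apply: eq_bigr => b _.
by rewrite /= mcoeffD mcoeffZ scalerA -scalerDl; congr (_ *: _); ring.
Qed.

Lemma tmul_linr c p q r : tmul r (c *: p + q) = c *: tmul r p + tmul r q.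
Proof.
set s := undup (msupp p ++ msupp q).
have us : uniq s by exact: undup_uniq.
have sp : {subset msupp p <= s} by move=> a h; rewrite mem_undup mem_cat h.
have sq : {subset msupp q <= s} by move=> a h; rewrite mem_undup mem_cat h orbT.
have spq : {subset msupp (c *: p + q) <= s}.
  move=> a /msuppD_le; rewrite mem_cat => /orP[/msuppZ_le/sp|/sq] //.
have sr : {subset msupp r <= msupp r} by [].
rewrite (tmul_sub (msupp_uniq r) us sr spq) (tmul_sub (msupp_uniq r) us sr sp).
rewrite (tmul_sub (msupp_uniq r) us sr sq).
rewrite scaler_sumr -big_split; apply: eq_bigr => a _.
rewrite scaler_sumr -big_split; apply: eq_bigr => b _.
by rewrite /= mcoeffD mcoeffZ scalerA -scalerDl; congr (_ *: _); ring.
Qed.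

Lemma msupp00 : msupp (0 : {mpoly k[n]}) = [::].
Proof. by apply/eqP; rewrite msupp_eq0. Qed.

Lemma tmul0l r : tmul 0 r = 0.
Proof. by rewrite /tmul msupp00 big_nil. Qed.
Lemma tmul0r r : tmul r 0 = 0.
Proof. by rewrite /tmul msupp00; apply: big1 => a _; rewrite big_nil. Qed.
Lemma tmulDl p q r : tmul (p + q) r = tmul p r + tmul q r.
Proof. by rewrite -{1}(scale1r p) tmul_linl scale1r. Qed.
Lemma tmulDr p q r : tmul r (p + q) = tmul r p + tmul r q.
Proof. by rewrite -{1}(scale1r p) tmul_linr scale1r. Qed.
Lemma tmulZl c p r : tmul (c *: p) r = c *: tmul p r.
Proof. by rewrite -(addr0 (c *: p)) tmul_linl tmul0l addr0. Qed.
Lemma tmulZr c p r : tmul r (c *: p) = c *: tmul r p.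
Proof. by rewrite -(addr0 (c *: p)) tmul_linr tmul0r addr0. Qed.
Lemma tmulNl p r : tmul (- p) r = - tmul p r.
Proof. by rewrite -scaleN1r tmulZl scaleN1r. Qed.
Lemma tmulNr p r : tmul r (- p) = - tmul r p.
Proof. by rewrite -scaleN1r tmulZr scaleN1r. Qed.
Lemma tmul_suml (I : Type) (s : seq I) (F : I -> {mpoly k[n]}) r :
  tmul (\sum_(i <- s) F i) r = \sum_(i <- s) tmul (F i) r.
Proof.
elim: s => [|x s IH]; first by rewrite !big_nil tmul0l.
by rewrite !big_cons tmulDl IH.
Qed.
Lemma tmul_sumr (I : Type) (s : seq I) (F : I -> {mpoly k[n]}) r :
  tmul r (\sum_(i <- s) F i) = \sum_(i <- s) tmul r (F i).
Proof.
elim: s => [|x s IH]; first by rewrite !big_nil tmul0r.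
by rewrite !big_cons tmulDr IH.
Qed.

Lemma tmulXX a b : tmul ('X_[a] : {mpoly k[n]}) 'X_[b] = (-1) ^+ tsign a b *: 'X_[a + b].
Proof. by rewrite /tmul !msuppX !big_seq1 !mcoeffX !eqxx !mul1r. Qed.

Lemma tsign0l b : tsign 0%MM b = 0%N.
Proof. by rewrite /tsign big1 // => i _; apply: big1 => j _; rewrite mnm0E. Qed.
Lemma tsign0r a : tsign a 0%MM = 0%N.
Proof. by rewrite /tsign big1 // => i _; apply: big1 => j _; rewrite mnm0E muln0. Qed.

Lemma tmul1l p : tmul 1 p = p.
Proof.
rewrite -mpolyX0 [in tmul _ p](mpolyE p) tmul_sumr [RHS]mpolyE.
by apply: eq_bigr => b _; rewrite tmulZr tmulXX tsign0l expr0 scale1r add0m.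
Qed.
Lemma tmul1r p : tmul p 1 = p.
Proof.
rewrite -mpolyX0 [in tmul p _](mpolyE p) tmul_suml [RHS]mpolyE.
by apply: eq_bigr => b _; rewrite tmulZl tmulXX tsign0r expr0 scale1r addm0.
Qed.

Lemma tsignU (i j : 'I_n) : tsign U_(i)%MM U_(j)%MM = (j < i)%N.
Proof.
rewrite /tsign (bigD1 i) //= [X in (_ + X)%N]big1 ?addn0; last first.
  by move=> i' ne; apply: big1 => j' _; rewrite mnm1E eq_sym (negbTE ne).
rewrite big_mkcond (bigD1 j) //= [X in (_ + X)%N]big1 ?addn0; last first.
  by move=> j0 ne; case: ifP => // _; rewrite !mnm1E eqxx eq_sym (negbTE ne) muln0.
by rewrite !mnm1E !eqxx muln1; case: (j < i)%N.
Qed.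

Lemma tmulUU (i j : 'I_n) : tmul ('X_i : {mpoly k[n]}) 'X_j = (-1) ^+ (j < i)%N *: 'X_[U_(i) + U_(j)].
Proof. by rewrite tmulXX tsignU. Qed.

Lemma tmulUUsq (i : 'I_n) : tmul ('X_i : {mpoly k[n]}) 'X_i = 'X_[U_(i) + U_(i)].
Proof. by rewrite tmulUU ltnn expr0 scale1r. Qed.

Lemma tmulUU_anti (i j : 'I_n) : tmul ('X_i : {mpoly k[n]}) 'X_j + tmul 'X_j 'X_i =
   ((i == j)%:R *+ 2) *: 'X_[U_(i) + U_(j)].
Proof.
rewrite !tmulUU [(U_(j) + _)%MM]addmC -scalerDl; congr (_ *: _).
case: (ltngtP i j) => h.
- by rewrite -val_eqE /= (ltn_eqF h) /= expr0 expr1 addrN mul0rn.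
- by rewrite -val_eqE /= (gtn_eqF h) /= expr0 expr1 addNr mul0rn.
- have e : i = j by apply: val_inj.
  by rewrite e eqxx /= expr0 mulr2n.
Qed.

Lemma tmul_lin (a b : 'I_n -> k) :
  tmul (\sum_i a i *: ('X_i : {mpoly k[n]})) (\sum_j b j *: 'X_j) =
  \sum_i \sum_j (a i * b j) *: tmul 'X_i 'X_j.
Proof.
rewrite tmul_suml; apply: eq_bigr => i _; rewrite tmulZl tmul_sumr scaler_sumr.
by apply: eq_bigr => j _; rewrite tmulZr scalerA.
Qed.

Lemma tmul_lin_anti (a b : 'I_n -> k) :
  tmul (\sum_i a i *: ('X_i : {mpoly k[n]})) (\sum_j b j *: 'X_j) +
  tmul (\sum_j b j *: 'X_j) (\sum_i a i *: 'X_i) =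
  \sum_l (a l * b l *+ 2) *: 'X_[U_(l) + U_(l)].
Proof.
rewrite !tmul_lin [X in _ + X]exchange_big -big_split; apply: eq_bigr => i _ /=.
rewrite -big_split /= (bigD1 i) //= big1 ?addr0.
  by rewrite [b i * a i]mulrC -scalerDr tmulUU_anti eqxx scalerA mulrnAr mulr1.
move=> j ne; rewrite [b j * a i]mulrC -scalerDr tmulUU_anti eq_sym (negbTE ne).
by rewrite mul0rn scale0r scaler0.
Qed.

Lemma tmul_lin_sq (two : (2%:R : k) != 0) (a : 'I_n -> k) :
  tmul (\sum_i a i *: ('X_i : {mpoly k[n]})) (\sum_i a i *: 'X_i) =
  \sum_l (a l ^+ 2) *: 'X_[U_(l) + U_(l)].
Proof.
have := tmul_lin_anti a a.
rewrite -mulr2n -scaler_nat.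
have -> : \sum_l (a l * a l *+ 2) *: ('X_[U_(l) + U_(l)] : {mpoly k[n]}) =
   2%:R *: \sum_l (a l ^+ 2) *: 'X_[U_(l) + U_(l)].
  by rewrite scaler_sumr; apply: eq_bigr => l _; rewrite scalerA expr2 mulr_natl.
by move/(congr1 (fun x => 2%:R^-1 *: x)); rewrite !scalerA mulVf // !scale1r.
Qed.

Lemma mnmUU_eq (l l0 : 'I_n) : (U_(l) + U_(l) == U_(l0) + U_(l0))%MM = (l == l0).
Proof.
case: (eqVneq l l0) => [->|ne]; first by rewrite eqxx.
apply/negbTE/negP => /eqP/mnmP/(_ l); rewrite !mnmDE !mnm1E eqxx eq_sym (negbTE ne).
by [].
Qed.

Lemma coef_sq (c : 'I_n -> k) (l0 : 'I_n) :
  (\sum_l c l *: ('X_[U_(l) + U_(l)] : {mpoly k[n]}))@_(U_(l0) + U_(l0)) = c l0.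
Proof.
rewrite raddf_sum (bigD1 l0) //= big1 ?addr0.
  by rewrite mcoeffZ mcoeffX eqxx mulr1.
by move=> l ne; rewrite mcoeffZ mcoeffX mnmUU_eq (negbTE ne) mulr0.
Qed.

Lemma sq_inj (c c' : 'I_n -> k) :
  \sum_l c l *: ('X_[U_(l) + U_(l)] : {mpoly k[n]}) =
  \sum_l c' l *: 'X_[U_(l) + U_(l)] -> forall l, c l = c' l.
Proof. by move=> E l; rewrite -(coef_sq c l) E coef_sq. Qed.

Lemma homog1_lin p : is_homog 1 p -> p = \sum_j p@_(U_(j)%MM) *: 'X_j.
Proof.
move=> hp; rewrite {1}(mpolyE p).
rewrite (@sum_msupp_sub _ p [seq U_(j)%MM | j <- index_enum 'I_n]).
- by rewrite big_map.
- rewrite map_inj_uniq ?index_enum_uniq //.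
  by move=> i j /eqP; rewrite eq_mnm1 => /eqP.
- move=> a /hp /eqP /mdeg1P [j /eqP ->]; apply/mapP; exists j => //.
  by rewrite mem_index_enum.
- by move=> a ->; rewrite scale0r.
Qed.

End Basic.


Section Mono.
Variable k : fieldType.
Variable n : nat.

Definition monomial (C : 'M[k]_n) (s : {perm 'I_n}) :=
  forall i j, (C i j != 0) = (j == s i).

Lemma monomial_of (C : 'M[k]_n) :
  (forall i, exists j, C i j != 0) ->
  (forall i i' l, i != i' -> C i l * C i' l = 0) ->
  exists s, monomial C s.
Proof.
move=> row col.
pose g i := odflt i [pick j | C i j != 0].
have gP i : C i (g i) != 0.
  rewrite /g; case: pickP => [j //|/= none].
  by have [j hj] := row i; move: (none j); rewrite hj.
have ginj : injective g.
  move=> i i' e; apply/eqP; apply/negPn/negP => ne.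
  by have := col _ _ (g i) ne; rewrite {2}e; apply/eqP; rewrite mulf_neq0.
exists (perm ginj) => i j; rewrite permE.
apply/idP/idP; last by move/eqP ->.
move=> hij; set i' := ((perm ginj)^-1)%g j.
have e : j = g i' by rewrite /i' -{1}(permKV (perm ginj) j) permE.
case: (eqVneq i i') => [-> |ne]; first by rewrite {1}e.
have := col _ _ j ne; rewrite {2}e; move/eqP; rewrite mulf_eq0 (negbTE hij) /=.
by rewrite (negbTE (gP _)).
Qed.

Lemma monomial_QPL C s : monomial C s -> QPL C.
Proof.
move=> mC; split.
- pose D := \matrix_(j, i) (C i j)^-1.
  suff : C *m D = 1%:M by case/mulmx1_unit.
  apply/matrixP => i i'; rewrite !mxE (bigD1 (s i)) //= big1 ?addr0.
    rewrite mxE; case: (eqVneq i i') => [<-|ne].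
      by rewrite divff // mC.
    have : C i' (s i) == 0.
      by apply/negPn/negP; rewrite mC => /eqP /perm_inj e; rewrite e eqxx in ne.
    by move/eqP ->; rewrite invr0 mulr0.
  move=> j ne; have : C i j == 0 by apply/negPn/negP; rewrite mC (negbTE ne).
  by move/eqP ->; rewrite mul0r.
- move=> i; apply/eqP/cards1P; exists (s i); apply/setP => j.
  by rewrite !inE mC.
- move=> j; apply/eqP/cards1P; exists ((s^-1)%g j); apply/setP => i.
  rewrite !inE mC; apply/eqP/eqP => [->|->]; first by rewrite permK.
  by rewrite permKV.
Qed.

Lemma QPL_monomial C : QPL C -> exists s, monomial C s.
Proof.
case=> _ row col; apply: monomial_of.
- move=> i; have /cards1P [j hj] : #|[set j | C i j != 0]| == 1%N by rewrite row.
  by exists j; move: (set11 j); rewrite -hj inE.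
- move=> i i' l ne; apply/eqP; rewrite mulf_eq0; apply/negPn/negP.
  rewrite negb_or => /andP [h1 h2].
  have /cards1P [x hx] : #|[set i | C i l != 0]| == 1%N by rewrite col.
  have : i \in [set i | C i l != 0] by rewrite inE.
  have : i' \in [set i | C i l != 0] by rewrite inE.
  by rewrite hx !inE => /eqP e1 /eqP e2; rewrite e1 e2 eqxx in ne.
Qed.

End Mono.


Section Lin.
Variable k : fieldType.
Variable n : nat.
Variable g : {mpoly k[n]} -> {mpoly k[n]}.
Hypothesis glin : forall (c : k) p q, g (c *: p + q) = c *: g p + g q.

Lemma g0 : g 0 = 0.
Proof.
have := glin 1 0 0; rewrite !scale1r addr0.
by move/(congr1 (fun x => x - g 0)); rewrite subrr addrK => <-.
Qed.
Lemma gD p q : g (p + q) = g p + g q.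
Proof. by rewrite -{1}(scale1r p) glin scale1r. Qed.
Lemma gZ c p : g (c *: p) = c *: g p.
Proof. by rewrite -(addr0 (c *: p)) glin g0 addr0. Qed.
Lemma gN p : g (- p) = - g p.
Proof. by rewrite -scaleN1r gZ scaleN1r. Qed.
Lemma g_sum (I : Type) (s : seq I) (F : I -> {mpoly k[n]}) :
  g (\sum_(i <- s) F i) = \sum_(i <- s) g (F i).
Proof.
elim: s => [|x s IH]; first by rewrite !big_nil g0.
by rewrite !big_cons gD IH.
Qed.
End Lin.

Section Diff.
Variable k : fieldType.
Variable n : nat.
Variable M : 'M[k]_n.
Variable d : {mpoly k[n]} -> {mpoly k[n]}.
Hypothesis Hd : is_diff M d.

Lemma dlin : forall (c : k) p q, d (c *: p + q) = c *: d p + d q.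
Proof. by case: Hd. Qed.

Lemma dleib e p q : is_homog e p ->
  d (tmul p q) = tmul (d p) q + (-1) ^+ e *: tmul p (d q).
Proof. by case: Hd => _ H _; apply: H. Qed.

Lemma homog1 : is_homog 0 (1 : {mpoly k[n]}).
Proof. by move=> m; rewrite -mpolyX0 => /mem_msuppXP <-; rewrite mdeg0. Qed.

Lemma homogX (i : 'I_n) : is_homog 1 ('X_i : {mpoly k[n]}).
Proof. by move=> m /mem_msuppXP <-; rewrite mdeg1. Qed.

Lemma d1 : d 1 = 0.
Proof.
have := dleib 1 homog1; rewrite tmul1l tmul1r expr0 scale1r.
by rewrite tmul1l; move/(congr1 (fun x => x - d 1)); rewrite subrr addrK => <-.
Qed.

Lemma dX (i : 'I_n) : d 'X_i = \sum_l M i l *: 'X_[U_(l) + U_(l)].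
Proof. by case: Hd => _ _ ->; apply: eq_bigr => l _; rewrite tmulUUsq. Qed.

Definition sqmx (C : 'M[k]_n) := map_mx (fun c => c ^+ 2) C.

Section F.
Variable f : {mpoly k[n]} -> {mpoly k[n]}.
Hypothesis flin : forall (c : k) p q, f (c *: p + q) = c *: f p + f q.
Hypothesis fmul : forall p q, f (tmul p q) = tmul (f p) (f q).
Variable C : 'M[k]_n.
Hypothesis frep : represents f C.
Hypothesis two : (2%:R : k) != 0.

Lemma fdX i : f (d 'X_i) = \sum_l (M *m sqmx C) i l *: 'X_[U_(l) + U_(l)].
Proof.
case: Hd => _ _ ->; rewrite g_sum //.
under eq_bigr do rewrite gZ // fmul frep tmul_lin_sq // scaler_sumr.
rewrite exchange_big; apply: eq_bigr => l _ /=.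
by rewrite !mxE scaler_suml; apply: eq_bigr => j _; rewrite mxE scalerA.
Qed.

Lemma dfX i : d (f 'X_i) = \sum_l (C *m M) i l *: 'X_[U_(l) + U_(l)].
Proof.
rewrite frep g_sum; last exact: dlin.
under eq_bigr do rewrite (gZ dlin) dX scaler_sumr.
rewrite exchange_big; apply: eq_bigr => l _ /=.
by rewrite !mxE scaler_suml; apply: eq_bigr => j _; rewrite scalerA.
Qed.

End F.
End Diff.


Section Forward.
Variable k : fieldType.
Variable n : nat.
Variable M : 'M[k]_n.
Variable d : {mpoly k[n]} -> {mpoly k[n]}.
Hypothesis Hd : is_diff M d.
Hypothesis two : (2%:R : k) != 0.

Lemma aut_rep f : is_dg_aut d f ->
  represents f (\matrix_(i, j) (f 'X_i)@_(U_(j)%MM)).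
Proof.
case=> _ _ _ fhom _ i; rewrite {1}(homog1_lin (fhom 1%N _ (@homogX _ _ i))).
by apply: eq_bigr => j _; rewrite mxE.
Qed.

Lemma aut_QPL f C : is_dg_aut d f -> represents f C ->
  QPL C /\ M = invmx C *m M *m sqmx C.
Proof.
case=> fbij flin [f1 fmul] fhom fd frep.
have col : forall i i' l, i != i' -> C i l * C i' l = 0.
  move=> i i' l ne.
  have := congr1 f (@tmulUU_anti k n i i'); rewrite (negbTE ne) mul0rn scale0r.
  rewrite (g0 flin) (gD flin) !fmul !frep tmul_lin_anti.
  move/(congr1 (mcoeff (U_(l) + U_(l))%MM)); rewrite coef_sq mcoeff0.
  by move/eqP; rewrite -mulr_natr mulf_eq0 (negbTE two) orbF => /eqP.
have row : forall i, exists j, C i j != 0.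
  move=> i; case: (pickP (fun j => C i j != 0)) => [j hj|h]; first by exists j.
  have : f 'X_i = f 0.
    rewrite (g0 flin) frep; apply: big1 => j _.
    by have := h j; move/negbFE/eqP ->; rewrite scale0r.
  move/(bij_inj fbij)/(congr1 (mcoeff U_(i)%MM)).
  by rewrite mcoeffX eqxx mcoeff0; move/eqP; rewrite oner_eq0.
have [s ms] := monomial_of row col.
have qC := monomial_QPL ms; split => //.
have uC : C \in unitmx by case: qC.
have E : M *m sqmx C = C *m M.
  apply/matrixP => i l; have := fd 'X_i.
  rewrite (fdX Hd flin fmul frep two) (dfX Hd frep).
  by move/sq_inj; apply.
by rewrite -mulmxA E mulKmx.
Qed.

End Forward.


Lemma signK (R : comNzRingType) (t : nat) : (-1) ^+ t * (-1) ^+ t = 1 :> R.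
Proof. by rewrite -exprMn mulrNN mulr1 expr1n. Qed.

Section Comm.
Variable k : fieldType.
Variable n : nat.
Variable M : 'M[k]_n.
Variable d : {mpoly k[n]} -> {mpoly k[n]}.
Hypothesis Hd : is_diff M d.
Variable f : {mpoly k[n]} -> {mpoly k[n]}.
Hypothesis flin : forall (c : k) p q, f (c *: p + q) = c *: f p + f q.
Hypothesis fmul : forall p q, f (tmul p q) = tmul (f p) (f q).
Hypothesis f1 : f 1 = 1.
Hypothesis fhX : forall i, is_homog 1 (f 'X_i).
Hypothesis fdX : forall i, f (d 'X_i) = d (f 'X_i).

Lemma comm_mono N a : (mdeg a <= N)%N -> f (d 'X_[a]) = d (f 'X_[a]).
Proof.
elim: N a => [|N IH] a ha.
  have : a = 0%MM by apply/eqP; rewrite -mdeg_eq0 -leqn0.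
  by move=> ->; rewrite mpolyX0 (d1 Hd) (g0 flin) f1 (d1 Hd).
case: (pickP (fun i => a i != 0%N)) => [i hi|h]; last first.
  have -> : a = 0%MM by apply/mnmP => j; rewrite mnm0E; have := h j; move/negbFE/eqP.
  by rewrite mpolyX0 (d1 Hd) (g0 flin) f1 (d1 Hd).
set a' := (a - U_(i))%MM.
have ea : a = (U_(i) + a')%MM.
  apply/mnmP => j; rewrite mnmDE mnmBE mnm1E.
  by case: (eqVneq i j) => [<-|_] /=; [rewrite subnKC // lt0n | rewrite subn0].
have ha' : (mdeg a' <= N)%N by move: ha; rewrite ea mdegD mdeg1.
have eX : 'X_[a] = (-1) ^+ tsign U_(i)%MM a' *: tmul ('X_i : {mpoly k[n]}) 'X_[a'].
  by rewrite tmulXX scalerA signK scale1r -ea.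
rewrite eX (gZ (dlin Hd)) (gZ flin) (gZ flin) (gZ (dlin Hd)); congr (_ *: _).
rewrite (dleib Hd _ (@homogX _ _ i)) fmul (dleib Hd _ (@fhX i)).
by rewrite (gD flin) (gZ flin) !fmul fdX IH.
Qed.

Lemma comm_all p : f (d p) = d (f p).
Proof.
rewrite (mpolyE p) (g_sum (dlin Hd)) !(g_sum flin) (g_sum (dlin Hd)).
apply: eq_bigr => a _; rewrite (gZ (dlin Hd)) !(gZ flin) (gZ (dlin Hd)).
by rewrite (@comm_mono (mdeg a)).
Qed.
End Comm.


Section Bil.
Variable n : nat.
Implicit Types a b : 'X_{1..n}.

Definition bil (w : 'I_n -> 'I_n -> nat) a b :=
  (\sum_(i < n) \sum_(j < n) w i j * a i * b j)%N.

Lemma bil_ext w1 w2 a b : (forall i j, w1 i j = w2 i j) -> bil w1 a b = bil w2 a b.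
Proof. by move=> h; apply: eq_bigr => i _; apply: eq_bigr => j _; rewrite h. Qed.

Lemma bil_add w1 w2 a b :
  (bil w1 a b + bil w2 a b)%N = bil (fun i j => w1 i j + w2 i j)%N a b.
Proof.
rewrite /bil -big_split; apply: eq_bigr => i _ /=.
by rewrite -big_split; apply: eq_bigr => j _ /=; rewrite !mulnDl.
Qed.

Lemma bil_mul2 w a b : bil (fun i j => 2 * w i j)%N a b = (2 * bil w a b)%N.
Proof.
rewrite /bil big_distrr; apply: eq_bigr => i _ /=.
by rewrite big_distrr; apply: eq_bigr => j _ /=; rewrite !mulnA.
Qed.

Lemma bilDl w a a' b : bil w (a + a')%MM b = (bil w a b + bil w a' b)%N.
Proof.
rewrite /bil -big_split; apply: eq_bigr => i _ /=.
by rewrite -big_split; apply: eq_bigr => j _ /=; rewrite mnmDE mulnDr mulnDl.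
Qed.

Lemma bilDr w a b b' : bil w a (b + b')%MM = (bil w a b + bil w a b')%N.
Proof.
rewrite /bil -big_split; apply: eq_bigr => i _ /=.
by rewrite -big_split; apply: eq_bigr => j _ /=; rewrite mnmDE mulnDr.
Qed.

Lemma bil_swap w a b : bil w b a = bil (fun i j => w j i) a b.
Proof.
rewrite /bil exchange_big; apply: eq_bigr => i _; apply: eq_bigr => j _ /=.
by rewrite mulnAC.
Qed.

Lemma bil0 w b : bil w 0%MM b = 0%N.
Proof. by apply: big1 => i _; apply: big1 => j _; rewrite mnm0E muln0 mul0n. Qed.

Lemma bilUU w (i j : 'I_n) : bil w U_(i)%MM U_(j)%MM = w i j.
Proof.
rewrite /bil (bigD1 i) //= [X in (_ + X)%N]big1 ?addn0; last first.
  by move=> i' ne; apply: big1 => j' _; rewrite mnm1E eq_sym (negbTE ne) muln0 mul0n.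
rewrite (bigD1 j) //= [X in (_ + X)%N]big1 ?addn0; last first.
  by move=> j' ne; rewrite !mnm1E eq_sym (negbTE ne) muln0.
by rewrite !mnm1E !eqxx !muln1.
Qed.

Lemma tsign_bil a b : tsign a b = bil (fun i j => (j < i)%N : nat) a b.
Proof.
apply: eq_bigr => i _; rewrite big_mkcond; apply: eq_bigr => j _ /=.
by case: (j < i)%N; rewrite ?mul1n ?mul0n.
Qed.

End Bil.

Lemma sign_even (R : nzRingType) (x y z : nat) : (x + y = 2 * z)%N ->
  (-1) ^+ x = (-1) ^+ y :> R.
Proof.
move=> e; rewrite -signr_odd -[in RHS]signr_odd; congr (_ ^+ _).
have : odd (x + y) = false by rewrite e oddM.
by rewrite oddD; case: (odd x); case: (odd y).
Qed.

Lemma weight_id (x y x' y' : nat) : (x == y) = (x' == y') ->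
  ((y < x) + (y' < x') + ((y < x) && (x' < y')) + ((x < y) && (y' < x')))%N
  = (2 * ((y < x) || (y' < x')))%N.
Proof.
move=> e.
case: (ltngtP x y) => h1; case: (ltngtP x' y') => h2 //=.
all: try by move: e; rewrite ?(ltn_eqF h1) ?(gtn_eqF h1) ?(ltn_eqF h2) ?(gtn_eqF h2) ?h1 ?h2 ?eqxx.
all: try by rewrite ?(ltn_eqF h1) ?(gtn_eqF h1) ?(ltn_eqF h2) ?(gtn_eqF h2) ?h1 ?h2 ?ltnn.
all: idtac.
Qed.

Section Act.
Variable n : nat.
Implicit Types a b m : 'X_{1..n}.

Definition xact (t : {perm 'I_n}) a : 'X_{1..n} := [multinom a ((t^-1)%g j) | j < n].

Lemma xactE t a i : xact t a (t i) = a i.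
Proof. by rewrite mnmE permK. Qed.

Lemma xactK t : cancel (xact t) (xact t^-1).
Proof. by move=> a; apply/mnmP => j; rewrite mnmE invgK xactE. Qed.

Lemma xactKV t : cancel (xact t^-1) (xact t).
Proof. by move=> a; apply/mnmP => j; rewrite mnmE mnmE invgK permKV. Qed.

Lemma xactD t a b : xact t (a + b)%MM = (xact t a + xact t b)%MM.
Proof. by apply/mnmP => j; rewrite !mnmE. Qed.

Lemma xact0 t : xact t 0%MM = 0%MM.
Proof. by apply/mnmP => j; rewrite !mnmE. Qed.

Lemma xactU t i : xact t U_(i)%MM = U_(t i)%MM.
Proof.
apply/mnmP => j; rewrite mnmE !mnm1E.
by rewrite -(inj_eq (@perm_inj _ t)) permKV.
Qed.

Lemma mdeg_xact t a : mdeg (xact t a) = mdeg a.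
Proof.
rewrite !mdegE (reindex_inj (@perm_inj _ t)).
by apply: eq_bigr => i _; rewrite xactE.
Qed.

Lemma tsign_xact t a b :
  tsign (xact t a) (xact t b) = bil (fun i j => (t j < t i)%N : nat) a b.
Proof.
rewrite tsign_bil /bil (reindex_inj (@perm_inj _ t)); apply: eq_bigr => i _.
rewrite (reindex_inj (@perm_inj _ t)); apply: eq_bigr => j _.
by rewrite !xactE.
Qed.
End Act.

Section Coef.
Variable k : fieldType.
Variable n : nat.

Lemma mcoef_mapX (phi psi : 'X_{1..n} -> 'X_{1..n}) (v : 'X_{1..n} -> k)
  (p : {mpoly k[n]}) m : cancel psi phi -> cancel phi psi ->
  (\sum_(a <- msupp p) (p@_a * v a) *: ('X_[phi a] : {mpoly k[n]}))@_m =
  p@_(psi m) * v (psi m).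
Proof.
move=> K1 K2; rewrite raddf_sum.
rewrite (eq_bigr (fun a => (p@_a * v a) * (phi a == m)%:R)); last by move=> a _; rewrite /= mcoeffZ mcoeffX.
case: (boolP (psi m \in msupp p)) => h.
  rewrite (bigD1_seq (psi m)) ?msupp_uniq //= K1 eqxx mulr1 big1_seq ?addr0 //.
  move=> a /andP [ne _]; case: (eqVneq (phi a) m) => [e|_]; last by rewrite mulr0.
  by rewrite -e K2 eqxx in ne.
rewrite (memN_msupp_eq0 h) mul0r big1_seq // => a /andP [_ ha].
case: (eqVneq (phi a) m) => [e|_]; last by rewrite mulr0.
by rewrite -e K2 ha in h.
Qed.

Lemma tmul_expand (p q : {mpoly k[n]}) : tmul p q =
  \sum_(a <- msupp p) \sum_(b <- msupp q) (p@_a * q@_b) *: tmul 'X_[a] 'X_[b].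
Proof.
apply: eq_bigr => a _; apply: eq_bigr => b _.
by rewrite tmulXX scalerA.
Qed.
End Coef.


Section Constr.
Variable k : fieldType.
Variable n : nat.
Variable s : {perm 'I_n}.
Variable c : 'I_n -> k.
Hypothesis hc : forall i, c i != 0.
Implicit Types a b m : 'X_{1..n}.
Implicit Types p q : {mpoly k[n]}.

Definition invw (i j : 'I_n) : nat := ((j < i) && (s i < s j))%N.
Definition sg a := bil invw a a.
Definition cp a := \prod_(i < n) c i ^+ a i.
Definition wt a := cp a * (-1) ^+ sg a.

Definition Fm p : {mpoly k[n]} :=
  \sum_(a <- msupp p) (p@_a * wt a) *: 'X_[xact s a].
Definition Gm p : {mpoly k[n]} :=
  \sum_(b <- msupp p) (p@_b * (wt (xact s^-1 b))^-1) *: 'X_[xact s^-1 b].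

Lemma wt_neq0 a : wt a != 0.
Proof.
rewrite /wt mulf_neq0 ?signr_eq0 //.
by rewrite /cp; apply/prodf_neq0 => i _; rewrite expf_neq0.
Qed.

Lemma Fm_coef p m : (Fm p)@_m = p@_(xact s^-1 m) * wt (xact s^-1 m).
Proof. by rewrite (@mcoef_mapX _ _ _ (xact s^-1)) //; [apply: xactKV | apply: xactK]. Qed.

Lemma Gm_coef p a : (Gm p)@_a = p@_(xact s a) * (wt a)^-1.
Proof.
rewrite /Gm (@mcoef_mapX _ _ _ (xact s)); last first.
- by first [exact: xactK | exact: xactKV].
- by first [exact: xactK | exact: xactKV].
by rewrite xactK.
Qed.

Lemma Fm_lin (x : k) p q : Fm (x *: p + q) = x *: Fm p + Fm q.
Proof.
apply/mpolyP => m; rewrite mcoeffD mcoeffZ !Fm_coef mcoeffD mcoeffZ.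
by ring.
Qed.

Lemma Fm_bij : bijective Fm.
Proof.
exists Gm => p; apply/mpolyP => m.
  by rewrite Gm_coef Fm_coef xactK mulfK // wt_neq0.
by rewrite Fm_coef Gm_coef xactKV mulfVK // wt_neq0.
Qed.

Lemma FmX a : Fm 'X_[a] = wt a *: 'X_[xact s a].
Proof. by rewrite /Fm msuppX big_seq1 mcoeffX eqxx mul1r. Qed.

Lemma cpD a b : cp (a + b)%MM = cp a * cp b.
Proof. by rewrite /cp -big_split; apply: eq_bigr => i _; rewrite mnmDE exprD. Qed.

Lemma wt_mul a b : (-1) ^+ tsign a b * wt (a + b)%MM =
  wt a * wt b * (-1) ^+ tsign (xact s a) (xact s b).
Proof.
have key : (-1) ^+ (tsign a b + bil invw a b + bil invw b a) =
           (-1) ^+ tsign (xact s a) (xact s b) :> k.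
  apply: (@sign_even _ _ _ (bil (fun i j => ((j < i) || (s j < s i))%N : nat) a b)).
  rewrite tsign_xact tsign_bil [bil invw b a]bil_swap.
  rewrite -addnA [(_ + bil _ a b)%N]addnC addnA.
  rewrite -addnA -[X in X = _]addnA.
  rewrite addnA !bil_add -bil_mul2; apply: bil_ext => i j /=.
  rewrite /invw -(@weight_id i j (s i) (s j)); last by rewrite !val_eqE (inj_eq perm_inj).
  ring.
rewrite -key /wt cpD /sg bilDl !bilDr !exprD.
ring.
Qed.

Lemma Fm1 : Fm 1 = 1.
Proof.
rewrite -mpolyX0 FmX xact0 /wt /sg bil0 expr0 mulr1.
rewrite /cp big1 ?scale1r // => i _; by rewrite mnm0E expr0.
Qed.

Lemma Fm_expand p : Fm p = \sum_(a <- msupp p) p@_a *: Fm 'X_[a].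
Proof. by apply: eq_bigr => a _; rewrite FmX scalerA. Qed.

Lemma Fm_mul p q : Fm (tmul p q) = tmul (Fm p) (Fm q).
Proof.
rewrite tmul_expand (g_sum Fm_lin).
rewrite [in RHS](Fm_expand p) [in RHS](Fm_expand q) tmul_suml.
apply: eq_big_seq => a _; rewrite (g_sum Fm_lin) tmulZl tmul_sumr scaler_sumr.
apply: eq_big_seq => b _; rewrite (gZ Fm_lin) tmulZr scalerA.
congr (_ *: _); rewrite tmulXX (gZ Fm_lin) !FmX tmulZl tmulZr tmulXX xactD.
by rewrite !scalerA wt_mul mulrA.
Qed.

Lemma Fm_homog e p : is_homog e p -> is_homog e (Fm p).
Proof.
move=> hp m; rewrite mcoeff_msupp Fm_coef mulf_eq0 negb_or => /andP [h _].
by rewrite -(xactKV s m) mdeg_xact; apply: hp; rewrite mcoeff_msupp.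
Qed.

Lemma FmXi (i : 'I_n) : Fm 'X_i = c i *: 'X_(s i).
Proof.
rewrite FmX xactU; congr (_ *: _).
rewrite /wt /sg bilUU /invw ltnn /= expr0 mulr1 /cp (bigD1 i) //= big1 ?mulr1.
  by rewrite mnm1E eqxx expr1.
by move=> j ne; rewrite mnm1E eq_sym (negbTE ne) expr0.
Qed.

End Constr.


Unset Implicit Arguments.
Set Strict Implicit.

Theorem corollary3p7 (k : closedFieldType) (Hchar : [pchar k] =i pred0)
    (n : nat) (Hn : (2 <= n)%N) (M : 'M[k]_n)
    (d : {mpoly k[n]} -> {mpoly k[n]}) (Hd : is_diff M d) :
  (forall f, is_dg_aut d f -> exists C : 'M[k]_n, represents f C) /\
  (forall C : 'M[k]_n,
     (exists f, is_dg_aut d f /\ represents f C) <->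
     (QPL C /\ M = invmx C *m M *m map_mx (fun c => c ^+ 2) C)).
Proof.
have two : (2%:R : k) != 0 by rewrite (pcharf0P k).1.
split.
  by move=> f hf; eexists; apply: (aut_rep hf).
move=> C; split.
  by case=> f [hf hr]; apply: (aut_QPL Hd two hf hr).
case=> qC eM.
have [s ms] := QPL_monomial qC.
pose c i := C i (s i).
have hc : forall i, c i != 0 by move=> i; rewrite /c ms.
have uC : C \in unitmx by case: qC.
have E : M *m sqmx C = C *m M.
  by rewrite /sqmx {2}eM !mulmxA mulmxV // mul1mx.
have rep : represents (Fm s c) C.
  move=> i; rewrite FmXi (bigD1 (s i)) //= big1 ?addr0 // => j ne.
  by move: (ms i j); rewrite (negbTE ne) => /negbFE/eqP ->; rewrite scale0r.
exists (Fm s c); split => //.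
have flin := @Fm_lin k n s c.
have fmul := @Fm_mul k n s c.
split.
- exact: Fm_bij.
- exact: flin.
- by split; [exact: Fm1 | exact: fmul].
- by move=> e p; apply: Fm_homog.
- apply: (comm_all Hd flin fmul (Fm1 s c)).
    by move=> i; apply: Fm_homog; apply: homogX.
  by move=> i; rewrite (fdX Hd flin fmul rep two) (dfX Hd rep) E.
Qed.
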